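(* Let $p>1$, $\beta=1/(p-1)$, $\gamma=\frac{p-2}{2(p-1)}$, and let $\phi$ be a solution of $$\phi''=\tfrac12 y\phi'-\gamma\phi-|\phi'|^p\ (y>0),\qquad \phi(0)=0,\quad \phi'(0)=\alpha>0,$$ which exists globally on $[0,\infty)$, satisfies $\phi>0$, $\phi'>0$ on $(0,\infty)$, and for which there is $\bar R>0$ with $\phi''<0$ on $[0,\bar R)$ and $\phi''>0$ on $(\bar R,\infty)$. Then $$\lim_{y\to\infty}\frac{\phi(y)}{y^{\beta+1}}=L:=\frac{p^{-\beta}}{\beta+1}.$$ *)

(* Defs.v *)
From Stdlib Require Import Reals Lra.
From Coquelicot Require Import Coquelicot.
Open Scope R_scope.

(* Real power x^a for x >= 0 (with 0^a := 0, appropriate for a > 0). *)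
Definition rpow (x a : R) : R := if Rle_dec x 0 then 0 else Rpower x a.

Definition deriv_on_nonneg (f f' : R -> R) : Prop :=
  (forall y, 0 < y -> is_derive f y (f' y)) /\
  filterlim (fun h => (f h - f 0) / h) (at_right 0) (locally (f' 0)).

(* Main.v *)
Require Import Defs.
From Stdlib Require Import Reals Lra Classical.
From Coquelicot Require Import Coquelicot.
Open Scope R_scope.

Lemma isd_minus (f g : R -> R) x df dg : is_derive f x df -> is_derive g x dg ->
  is_derive (fun t => f t - g t) x (df - dg).
Proof. intros H1 H2. exact (is_derive_minus f g x df dg H1 H2). Qed.
Lemma isd_plus (f g : R -> R) x df dg : is_derive f x df -> is_derive g x dg ->
  is_derive (fun t => f t + g t) x (df + dg).
Proof. intros H1 H2. exact (is_derive_plus f g x df dg H1 H2). Qed.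
Lemma isd_mult (f g : R -> R) x df dg : is_derive f x df -> is_derive g x dg ->
  is_derive (fun t => f t * g t) x (df * g x + f x * dg).
Proof. intros H1 H2. exact (is_derive_mult f g x df dg H1 H2 Rmult_comm). Qed.
Lemma isd_const (c x : R) : is_derive (fun _ => c) x 0.
Proof. exact (is_derive_const c x). Qed.
Lemma isd_id (x : R) : is_derive (fun t => t) x 1.
Proof. exact (is_derive_id x). Qed.
Lemma isd_eq (f : R -> R) (x l l' : R) : is_derive f x l -> l = l' -> is_derive f x l'.
Proof. intros H ->; exact H. Qed.

Lemma nonincr_derive (g g' : R -> R) a b : a <= b ->
  (forall x, a <= x <= b -> is_derive g x (g' x)) ->
  (forall x, a <= x <= b -> g' x <= 0) -> g b <= g a.
Proof.
  intros Hab Hd Hs.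
  destruct (MVT_gen g a b g') as [c [Hc Heq]].
  - intros x Hx. apply Hd. rewrite Rmin_left in Hx by lra. rewrite Rmax_right in Hx by lra. lra.
  - intros x Hx. rewrite Rmin_left in Hx by lra. rewrite Rmax_right in Hx by lra.
    apply continuity_pt_filterlim. apply (@ex_derive_continuous R_AbsRing R_NormedModule). exists (g' x). apply Hd; lra.
  - rewrite Rmin_left in Hc by lra. rewrite Rmax_right in Hc by lra.
    assert (g' c <= 0) by (apply Hs; lra).
    assert (g' c * (b - a) <= 0) by (apply Rmult_le_0_r; lra). lra.
Qed.

Lemma deriv_local (f : R -> R) x l : is_derive f x l ->
  forall e, 0 < e -> exists d, 0 < d /\ forall h, Rabs h < d ->
    Rabs (f (x + h) - f x - l * h) <= e * Rabs h.
Proof.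
  intros Hd e He. apply is_derive_Reals in Hd.
  destruct (Hd e He) as [d Hd']. exists d. split; [apply cond_pos|].
  intros h Hh. destruct (Req_dec h 0) as [->|Hn].
  - rewrite Rplus_0_r, Rabs_R0. replace (f x - f x - l * 0) with 0 by ring. rewrite Rabs_R0. lra.
  - specialize (Hd' h Hn Hh).
    replace (f (x + h) - f x - l * h) with (((f (x + h) - f x) / h - l) * h) by (field; auto).
    rewrite Rabs_mult. apply Rmult_le_compat_r; [apply Rabs_pos|lra].
Qed.

Lemma barrier (f f' : R -> R) a :
  (forall x, a <= x -> is_derive f x (f' x)) ->
  (forall x, a <= x -> f x = 0 -> f' x < 0) ->
  f a < 0 -> forall x, a <= x -> f x < 0.
Proof.
  intros Hd Hz Ha b Hb.
  destruct (Rlt_or_le (f b) 0) as [H|Hfb]; [exact H|exfalso].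
  set (E := fun x => a <= x <= b /\ forall t, a <= t <= x -> f t < 0).
  assert (HEb : bound E) by (exists b; intros x [Hx _]; lra).
  assert (HEa : exists x, E x) by (exists a; split; [lra| intros t Ht; replace t with a by lra; exact Ha]).
  destruct (completeness E HEb HEa) as [m [Hub Hlub]].
  assert (Ham : a <= m) by (apply Hub; split; [lra|intros t Ht; replace t with a by lra; exact Ha]).
  assert (Hmb : m <= b) by (apply Hlub; intros x [Hx _]; lra).
  assert (Hleft : forall t, a <= t < m -> f t < 0).
  { intros t Ht. destruct (Rlt_or_le (f t) 0) as [H|H]; [exact H|].
    assert (is_upper_bound E t).
    { intros x [Hx Hx']. destruct (Rle_or_lt x t) as [H1|H1]; [exact H1|].
      specialize (Hx' t ltac:(lra)). lra. }
    specialize (Hlub t H0). lra. }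
  assert (Hdm : a <= m) by lra.
  destruct (deriv_local f m (f' m) (Hd m Hdm)) with (e := 1) as [d [Hd0 Hdl]]; [lra|].
  set (K := Rabs (f' m) + 1).
  assert (HK : 0 < K) by (unfold K; pose proof (Rabs_pos (f' m)); lra).
  assert (Hctrl : forall h, Rabs h < d -> Rabs (f (m + h) - f m) <= K * Rabs h).
  { intros h Hh. specialize (Hdl h Hh).
    pose proof (Rabs_triang (f (m + h) - f m - f' m * h) (f' m * h)).
    replace (f (m + h) - f m - f' m * h + f' m * h) with (f (m + h) - f m) in H by ring.
    rewrite Rabs_mult in H. unfold K. lra. }
  assert (Ham' : a < m).
  { destruct (Rle_lt_or_eq_dec a m Ham) as [H|H]; [exact H|exfalso].
    (* f a < 0 so points slightly right of a are in E *)
    set (h := Rmin (d/2) (Rmin ((- f a) / (2 * K)) ((b - a)))).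
    destruct (Rle_lt_or_eq_dec a b (Rle_trans _ _ _ Ham Hmb)) as [Hab|Hab].
    2: { subst b. lra. }
    assert (Hh0 : 0 < h).
    { unfold h. repeat apply Rmin_glb_lt; try lra. apply Rdiv_lt_0_compat; lra. }
    assert (E (a + h)).
    { split. split; [lra|]. unfold h. pose proof (Rmin_r (d/2) (Rmin ((- f a) / (2 * K)) (b - a))).
      pose proof (Rmin_r ((- f a) / (2 * K)) (b - a)). lra.
      intros t Ht. rewrite <- H in Hctrl.
      specialize (Hctrl (t - a)). replace (a + (t - a)) with t in Hctrl by ring.
      assert (Rabs (t - a) < d).
      { rewrite Rabs_pos_eq by lra. unfold h in Ht. pose proof (Rmin_l (d/2) (Rmin ((- f a) / (2 * K)) (b - a))). lra. }
      specialize (Hctrl H0). rewrite (Rabs_pos_eq (t - a)) in Hctrl by lra.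
      assert (t - a <= (- f a) / (2 * K)).
      { unfold h in Ht. pose proof (Rmin_r (d/2) (Rmin ((- f a) / (2 * K)) (b - a))).
        pose proof (Rmin_l ((- f a) / (2 * K)) (b - a)). lra. }
      assert (K * (t - a) <= K * ((- f a) / (2 * K))) by (apply Rmult_le_compat_l; lra).
      replace (K * ((- f a) / (2 * K))) with (- f a / 2) in H2 by (field; lra).
      apply Rabs_le_between in Hctrl. lra. }
    specialize (Hub _ H0). lra. }
  destruct (Rtotal_order (f m) 0) as [Hneg|[Hzero|Hpos]].
  -
    destruct (Rle_lt_or_eq_dec m b Hmb) as [Hmb'|Hmb'].
    2: { subst m. lra. }
    set (h := Rmin (d/2) (Rmin ((- f m) / (2 * K)) ((b - m)))).
    assert (Hh0 : 0 < h).
    { unfold h. repeat apply Rmin_glb_lt; try lra. apply Rdiv_lt_0_compat; lra. }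
    assert (E (m + h)).
    { split. split; [lra|]. unfold h. pose proof (Rmin_r (d/2) (Rmin ((- f m) / (2 * K)) (b - m))).
      pose proof (Rmin_r ((- f m) / (2 * K)) (b - m)). lra.
      intros t Ht. destruct (Rlt_or_le t m) as [Htm|Htm]. apply Hleft; lra.
      specialize (Hctrl (t - m)). replace (m + (t - m)) with t in Hctrl by ring.
      assert (Rabs (t - m) < d).
      { rewrite Rabs_pos_eq by lra. unfold h in Ht. pose proof (Rmin_l (d/2) (Rmin ((- f m) / (2 * K)) (b - m))). lra. }
      specialize (Hctrl H). rewrite (Rabs_pos_eq (t - m)) in Hctrl by lra.
      assert (t - m <= (- f m) / (2 * K)).
      { unfold h in Ht. pose proof (Rmin_r (d/2) (Rmin ((- f m) / (2 * K)) (b - m))).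
        pose proof (Rmin_l ((- f m) / (2 * K)) (b - m)). lra. }
      assert (K * (t - m) <= K * ((- f m) / (2 * K))) by (apply Rmult_le_compat_l; lra).
      replace (K * ((- f m) / (2 * K))) with (- f m / 2) in H1 by (field; lra).
      apply Rabs_le_between in Hctrl. lra. }
    specialize (Hub _ H). lra.
  -
    assert (Hfm : f' m < 0) by (apply Hz; lra).
    set (e := - f' m / 2).
    destruct (deriv_local f m (f' m) (Hd m Hdm)) with (e := e) as [d2 [Hd2 Hdl2]]; [unfold e; lra|].
    set (h := Rmin (d2/2) ((m - a)/2)).
    assert (Hh0 : 0 < h) by (unfold h; apply Rmin_glb_lt; lra).
    assert (Hh1 : h <= d2/2) by apply Rmin_l.
    assert (Hh2 : h <= (m - a)/2) by apply Rmin_r.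
    specialize (Hdl2 (- h)). rewrite Rabs_Ropp, Rabs_pos_eq in Hdl2 by lra.
    specialize (Hdl2 ltac:(lra)). rewrite Hzero in Hdl2.
    apply Rabs_le_between in Hdl2.
    assert (f (m + - h) < 0) by (apply Hleft; lra).
    unfold e in Hdl2. nra.
  - set (h := Rmin (d/2) (Rmin ((f m) / (2 * K)) ((m - a)/2))).
    assert (Hh0 : 0 < h).
    { unfold h. repeat apply Rmin_glb_lt; try lra. apply Rdiv_lt_0_compat; lra. }
    pose proof (Rmin_l (d/2) (Rmin ((f m) / (2 * K)) ((m - a)/2))).
    pose proof (Rmin_r (d/2) (Rmin ((f m) / (2 * K)) ((m - a)/2))).
    pose proof (Rmin_l ((f m) / (2 * K)) ((m - a)/2)).
    pose proof (Rmin_r ((f m) / (2 * K)) ((m - a)/2)).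
    fold h in H, H0.
    specialize (Hctrl (- h)). rewrite Rabs_Ropp, (Rabs_pos_eq h) in Hctrl by lra.
    specialize (Hctrl ltac:(lra)).
    assert (K * h <= K * ((f m) / (2 * K))) by (apply Rmult_le_compat_l; lra).
    replace (K * ((f m) / (2 * K))) with (f m / 2) in H3 by (field; lra).
    apply Rabs_le_between in Hctrl.
    assert (f (m + - h) < 0) by (apply Hleft; lra). lra.
Qed.

Lemma trap (f f' : R -> R) a eps delta : 0 < a -> 0 < delta ->
  (forall x, a <= x -> is_derive f x (f' x)) ->
  (forall x, a <= x -> eps <= f x -> f' x <= - delta / x) ->
  exists N, forall x, N <= x -> f x < eps.
Proof.
  intros Ha Hdl Hd Hs.
  destruct (classic (exists b, a <= b /\ f b < eps)) as [[b [Hb Hfb]]|Hno].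
  - exists b. intros x Hx.
    assert (f x - eps < 0); [|lra].
    apply (barrier (fun t => f t - eps) f' b); auto.
    + intros t Ht. replace (f' t) with (f' t - 0) by ring. apply isd_minus.
      apply Hd; lra. apply isd_const.
    + intros t Ht Hz. assert (f' t <= - delta / t) by (apply Hs; lra).
      assert (0 < delta / t) by (apply Rdiv_lt_0_compat; lra). lra.
    + lra.
  - exfalso.
    assert (Hall : forall x, a <= x -> eps <= f x).
    { intros x Hx. destruct (Rle_or_lt eps (f x)); auto. exfalso; apply Hno; exists x; auto. }
    set (x := exp ((f a - eps) / delta + ln a + 1)).
    assert (Hlx : ln x = (f a - eps) / delta + ln a + 1) by (unfold x; apply ln_exp).
    assert (Hfa : eps <= f a) by (apply Hall; lra).
    assert (Hxa : a <= x).
    { assert (0 <= (f a - eps) / delta) by (apply Rdiv_le_0_compat; lra).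
      left. apply ln_lt_inv; [lra| unfold x; apply exp_pos|]. lra. }
    assert (Hmono : f x + delta * ln x <= f a + delta * ln a).
    { apply (nonincr_derive (fun t => f t + delta * ln t) (fun t => f' t + delta * / t)); auto.
      - intros t Ht. apply isd_plus. apply Hd; lra.
        apply (isd_eq _ _ (0 * ln t + delta * / t)). apply isd_mult. apply isd_const. apply is_derive_ln. lra. rewrite Rmult_0_l, Rplus_0_l; reflexivity.
      - intros t Ht. assert (f' t <= - delta / t) by (apply Hs; [lra | apply Hall; lra]).
        unfold Rdiv in H. lra. }
    rewrite Hlx in Hmono.
    replace (delta * ((f a - eps) / delta + ln a + 1)) with (f a - eps + delta * ln a + delta) in Hmono by (field; lra).
    assert (eps <= f x) by (apply Hall; lra). lra.
Qed.

Lemma lim_minus (f g : R -> R) (a b : R) : is_lim f p_infty a -> is_lim g p_infty b -> is_lim (fun x => f x - g x) p_infty (a - b).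
Proof. intros H1 H2. apply (is_lim_minus f g p_infty a b); auto. simpl. reflexivity. Qed.
Lemma lim_plus (f g : R -> R) (a b : R) : is_lim f p_infty a -> is_lim g p_infty b -> is_lim (fun x => f x + g x) p_infty (a + b).
Proof. intros H1 H2. apply (is_lim_plus f g p_infty a b); auto. simpl. reflexivity. Qed.
Lemma lim_mult (f g : R -> R) (a b : R) : is_lim f p_infty a -> is_lim g p_infty b -> is_lim (fun x => f x * g x) p_infty (a * b).
Proof. intros H1 H2. apply (is_lim_mult f g p_infty a b); auto. simpl; auto. Qed.
Lemma lim_div (f g : R -> R) (a b : R) : is_lim f p_infty a -> is_lim g p_infty b -> b <> 0 -> is_lim (fun x => f x / g x) p_infty (a / b).
Proof. intros H1 H2 Hb. apply (is_lim_div f g p_infty a b); auto. intro H; injection H; auto. simpl; auto. Qed.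
Lemma lim_const (c : R) : is_lim (fun _ => c) p_infty c.
Proof. apply is_lim_const. Qed.
Lemma lim_eq (f : R -> R) (a b : R) : is_lim f p_infty a -> a = b -> is_lim f p_infty b.
Proof. intros H ->; auto. Qed.


Definition bb p := / (p - 1).
Definition gg p := (p - 2) / (2 * (p - 1)).
Definition TT (u v : R -> R) y := y * v y / u y.
Definition SS p (phi u : R -> R) y := (bb p + 1) * phi y / (y * u y).
Definition cc p s := (p - 1) - (p - 2) * s.

Lemma loc_pos (P : R -> Prop) y : 0 < y -> (forall t, 0 < t -> P t) -> locally y P.
Proof.
intros Hy HP. exists (mkposreal (y/2) ltac:(lra)). intros t Ht.
apply HP. unfold ball in Ht; simpl in Ht. unfold AbsRing_ball, abs, minus, plus, opp in Ht; simpl in Ht.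
apply Rabs_lt_between' in Ht. lra. Qed.

Lemma dv p (phi u v : R -> R) y : 1 < p -> 0 < y ->
  (forall y, 0 < y -> is_derive phi y (u y)) ->
  (forall y, 0 < y -> is_derive u y (v y)) ->
  (forall y, 0 < y -> v y = /2 * y * u y - gg p * phi y - Rpower (u y) p) ->
  (forall y, 0 < y -> 0 < u y) ->
  is_derive v y (u y / 2 + y * v y / 2 - gg p * u y - p * Rpower (u y) p / u y * v y).
Proof.
  intros Hp Hy Hphi Hu Hode Hupos.
  apply (is_derive_ext_loc (fun t => /2 * t * u t - gg p * phi t - exp (p * ln (u t)))).
  { apply loc_pos; auto. intros t Ht. rewrite Hode by auto. reflexivity. }
  pose proof (Hupos y Hy) as Huy.
  apply (isd_eq _ _ ((/2 * 1 * u y + /2 * y * v y) - gg p * u y - (p * (v y / u y)) * exp (p * ln (u y)))).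
  2:{ unfold Rpower. field. lra. }
  apply isd_minus. apply isd_minus.
  - apply (isd_eq _ _ ((0 * y + /2 * 1) * u y + /2 * y * v y)); [|ring].
    apply (isd_mult (fun t => /2 * t) u). apply (isd_mult (fun _ => /2) (fun t => t)). apply isd_const. apply isd_id. auto.
  - apply (isd_eq _ _ (0 * phi y + gg p * u y)); [|ring].
    apply (isd_mult (fun _ => gg p) phi). apply isd_const. auto.
  - apply (is_derive_comp exp (fun t => p * ln (u t)) y).
    apply is_derive_exp.
    apply (isd_eq _ _ (0 * ln (u y) + p * (v y / u y))); [|ring].
    apply (isd_mult (fun _ => p) (fun t => ln (u t))). apply isd_const.
    apply (is_derive_comp ln u y). apply is_derive_ln; auto. auto.
Qed.

Lemma dT p (phi u v : R -> R) y : 1 < p -> 0 < y ->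
  (forall y, 0 < y -> is_derive phi y (u y)) ->
  (forall y, 0 < y -> is_derive u y (v y)) ->
  (forall y, 0 < y -> v y = /2 * y * u y - gg p * phi y - Rpower (u y) p) ->
  (forall y, 0 < y -> 0 < u y) ->
  is_derive (TT u v) y
   ((TT u v y + (p-1) * TT u v y ^ 2 + y ^ 2 / 2 * (bb p - TT u v y * cc p (SS p phi u y))) / y).
Proof.
  intros Hp Hy Hphi Hu Hode Hupos.
  pose proof (Hupos y Hy) as Huy.
  pose proof (dv p phi u v y Hp Hy Hphi Hu Hode Hupos) as Hv.
  unfold TT.
  eapply isd_eq.
  apply (is_derive_div (fun t => t * v t) u). 
  apply (isd_mult (fun t => t) v). apply isd_id. exact Hv. apply Hu; auto. lra.
  assert (HP : Rpower (u y) p = /2 * y * u y - gg p * phi y - v y) by (rewrite (Hode y Hy); ring).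
  rewrite HP. unfold SS, cc, bb, gg. field. repeat split; lra.
Qed.

Lemma dS p (phi u v : R -> R) y : 1 < p -> 0 < y ->
  (forall y, 0 < y -> is_derive phi y (u y)) ->
  (forall y, 0 < y -> is_derive u y (v y)) ->
  (forall y, 0 < y -> 0 < u y) ->
  is_derive (SS p phi u) y (((bb p + 1) - SS p phi u y * (1 + TT u v y)) / y).
Proof.
  intros Hp Hy Hphi Hu Hupos.
  pose proof (Hupos y Hy) as Huy.
  unfold SS.
  eapply isd_eq.
  apply (is_derive_div (fun t => (bb p + 1) * phi t) (fun t => t * u t)).
  apply (isd_mult (fun _ => bb p + 1) phi). apply isd_const. apply Hphi; auto.
  apply (isd_mult (fun t => t) u). apply isd_id. apply Hu; auto.
  apply Rgt_not_eq. apply Rmult_lt_0_compat; lra.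
  unfold TT. field. lra.
Qed.


Definition Hyps p (phi u v : R -> R) Rb :=
  1 < p /\ 0 < Rb /\ (forall y, 0 < y -> is_derive phi y (u y)) /\
  (forall y, 0 < y -> is_derive u y (v y)) /\
  (forall y, 0 < y -> v y = /2 * y * u y - gg p * phi y - Rpower (u y) p) /\
  (forall y, 0 < y -> 0 < phi y) /\ (forall y, 0 < y -> 0 < u y) /\
  (forall y, Rb < y -> 0 < v y).

Lemma bb_pos p : 1 < p -> 0 < bb p.
Proof. intros; unfold bb; apply Rinv_0_lt_compat; lra. Qed.
Lemma bb_eq p : 1 < p -> bb p * (p - 1) = 1.
Proof. intros; unfold bb; field; lra. Qed.

Lemma u_mono p phi u v Rb : Hyps p phi u v Rb ->
  forall a b, Rb < a -> a <= b -> u a <= u b.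
Proof.
  intros (Hp & HRb & Hphi & Hu & Hode & Hphip & Hup & Hvp) a b Ha Hab.
  assert (0 - u b <= 0 - u a); [|lra].
  apply (nonincr_derive (fun t => 0 - u t) (fun t => 0 - v t)); [exact Hab| |].
  - intros x Hx. apply isd_minus. apply isd_const. apply Hu; lra.
  - intros x Hx. assert (0 < v x) by (apply Hvp; lra). lra.
Qed.

Lemma phi_bound p phi u v Rb : Hyps p phi u v Rb ->
  forall a y, Rb < a -> a <= y -> phi y <= phi a + y * u y.
Proof.
  intros HH a y Ha Hay. pose proof HH as (Hp & HRb & Hphi & Hu & Hode & Hphip & Hup & Hvp).
  assert (phi y - y * u y <= phi a - a * u y).
  { apply (nonincr_derive (fun t => phi t - t * u y) (fun t => u t - u y)); [exact Hay| |].
    - intros x Hx. apply (isd_eq _ _ (u x - 1 * u y)); [|ring]. apply isd_minus. apply Hphi; lra.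
      apply (isd_eq _ _ (1 * u y + x * 0)); [|ring]. apply (isd_mult (fun t => t) (fun _ => u y)). apply isd_id. apply isd_const.
    - intros x Hx. assert (u x <= u y) by (apply (u_mono p phi u v Rb HH); lra). lra. }
  assert (0 < u y) by (apply Hup; lra). assert (0 <= a * u y) by (apply Rmult_le_pos; lra). lra.
Qed.

Definition dl p := bb p / (2 * p).
Definition Smax p := bb p + 1 + dl p.
Definition c0 p := Rmin (p - 1) (bb p / 2).
Definition y1 p (phi u : R -> R) Rb := (Rb+1) + (bb p + 1) * phi (Rb+1) / (dl p * u (Rb+1)).

Lemma c0_pos p : 1 < p -> 0 < c0 p.
Proof. intros Hp. unfold c0. apply Rmin_glb_lt. lra. pose proof (bb_pos p Hp); lra. Qed.

Lemma S_bounds p phi u v Rb : Hyps p phi u v Rb ->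
  forall y, y1 p phi u Rb <= y ->
  0 < SS p phi u y /\ SS p phi u y <= Smax p /\ c0 p <= cc p (SS p phi u y).
Proof.
  intros HH y Hy. pose proof HH as (Hp & HRb & Hphi & Hu & Hode & Hphip & Hup & Hvp).
  pose proof (bb_pos p Hp) as Hb. pose proof (bb_eq p Hp) as Hbe.
  assert (Hdl : 0 < dl p) by (unfold dl; apply Rdiv_lt_0_compat; lra).
  set (y0 := Rb + 1).
  assert (Hy0p : 0 < y0) by (unfold y0; lra).
  assert (Hphi0 : 0 < phi y0) by (apply Hphip; unfold y0; lra).
  assert (Hu0 : 0 < u y0) by (apply Hup; unfold y0; lra).
  assert (Hy0 : y0 <= y).
  { unfold y1 in Hy. fold y0 in Hy.
    assert (0 <= (bb p + 1) * phi y0 / (dl p * u y0)).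
    { apply Rlt_le, Rdiv_lt_0_compat. apply Rmult_lt_0_compat; lra. apply Rmult_lt_0_compat; lra. }
    lra. }
  assert (Hypos : 0 < y) by (unfold y0 in Hy0; lra).
  assert (Huy : 0 < u y) by auto. assert (Hphy : 0 < phi y) by auto.
  assert (Huy0 : u y0 <= u y) by (apply (u_mono p phi u v Rb HH); unfold y0 in *; lra).
  assert (Hpb : phi y <= phi y0 + y * u y) by (apply (phi_bound p phi u v Rb HH); unfold y0 in *; lra).
  assert (HS0 : 0 < SS p phi u y).
  { unfold SS. apply Rdiv_lt_0_compat. apply Rmult_lt_0_compat; lra. apply Rmult_lt_0_compat; lra. }
  assert (HS1 : SS p phi u y <= Smax p).
  { unfold SS, Smax.
    assert (Hk : (bb p + 1) * phi y0 / (y * u y) <= dl p).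
    { unfold y1 in Hy. fold y0 in Hy.
      apply (Rmult_le_reg_r (y * u y)). apply Rmult_lt_0_compat; lra.
      unfold Rdiv. rewrite Rmult_assoc, Rinv_l, Rmult_1_r by (apply Rgt_not_eq, Rmult_lt_0_compat; lra).
      assert ((bb p + 1) * phi y0 / (dl p * u y0) <= y) by lra.
      apply (Rmult_le_compat_r (dl p * u y0)) in H; [|apply Rlt_le, Rmult_lt_0_compat; lra].
      unfold Rdiv in H. rewrite Rmult_assoc, Rinv_l, Rmult_1_r in H by (apply Rgt_not_eq, Rmult_lt_0_compat; lra).
      assert (dl p * u y0 * y <= dl p * (y * u y)).
      { rewrite Rmult_assoc. apply Rmult_le_compat_l; [lra|]. rewrite Rmult_comm. apply Rmult_le_compat_l; lra. }
      lra. }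
    assert ((bb p + 1) * phi y / (y * u y) <= (bb p + 1) * phi y0 / (y * u y) + (bb p + 1) * (y * u y) / (y * u y)).
    { unfold Rdiv. rewrite <- Rmult_plus_distr_r. apply Rmult_le_compat_r.
      apply Rlt_le, Rinv_0_lt_compat, Rmult_lt_0_compat; lra.
      rewrite <- Rmult_plus_distr_l. apply Rmult_le_compat_l; lra. }
    replace ((bb p + 1) * (y * u y) / (y * u y)) with (bb p + 1) in H by (field; lra).
    lra. }
  repeat split; auto.
  unfold cc, c0.
  destruct (Rle_or_lt 2 p) as [H2|H2].
  -
    assert (Hid : (p - 1) - (p - 2) * (bb p + 1) = bb p) by (unfold bb; field; lra).
    assert (Hd2 : (p - 2) * dl p <= bb p / 2).
    { unfold dl. replace ((p - 2) * (bb p / (2 * p))) with (bb p / 2 * ((p - 2) / p)) by (field; lra).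
      rewrite <- (Rmult_1_r (bb p / 2)) at 2. apply Rmult_le_compat_l; [lra|].
      apply (Rmult_le_reg_r p); [lra|]. unfold Rdiv. rewrite Rmult_assoc, Rinv_l by lra. lra. }
    unfold Smax in HS1.
    assert ((p - 2) * SS p phi u y <= (p - 2) * (bb p + 1 + dl p)) by (apply Rmult_le_compat_l; lra).
    pose proof (Rmin_r (p - 1) (bb p / 2)). lra.
  - pose proof (Rmin_l (p - 1) (bb p / 2)).
    assert (0 <= (2 - p) * SS p phi u y) by (apply Rmult_le_pos; lra). lra.
Qed.


Definition AA p (phi u : R -> R) Rb := /2 + Rabs (gg p) * (1 + phi (Rb+1) / u (Rb+1)).

Lemma ln_lt_self x : 0 < x -> ln x < x.
Proof.
  intros Hx. rewrite <- (ln_exp x) at 2. apply ln_increasing; auto.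
  pose proof (exp_ineq1 x ltac:(lra)). lra.
Qed.

Lemma crude p phi u v Rb : Hyps p phi u v Rb ->
  forall y, Rb + 1 <= y -> 0 < AA p phi u Rb /\ (p - 1) * ln (u y) < ln (AA p phi u Rb) + y.
Proof.
  intros HH y Hy. pose proof HH as (Hp & HRb & Hphi & Hu & Hode & Hphip & Hup & Hvp).
  set (y0 := Rb + 1) in *.
  assert (Hy0p : 0 < y0) by (unfold y0; lra).
  assert (Hy1 : 1 <= y) by (unfold y0 in Hy; lra).
  assert (Hphi0 : 0 < phi y0) by auto.
  assert (Hu0 : 0 < u y0) by auto.
  assert (Huy : 0 < u y) by (apply Hup; lra). assert (Hphy : 0 < phi y) by (apply Hphip; lra).
  assert (Huy0 : u y0 <= u y) by (apply (u_mono p phi u v Rb HH); unfold y0 in *; lra).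
  assert (Hpb : phi y <= phi y0 + y * u y) by (apply (phi_bound p phi u v Rb HH); unfold y0 in *; lra).
  assert (Hv : 0 < v y) by (apply Hvp; unfold y0 in *; lra).
  rewrite (Hode y) in Hv by lra.
  set (g := gg p) in *.
  set (E := exp ((p - 1) * ln (u y))).
  assert (HE : Rpower (u y) p = u y * E).
  { unfold Rpower, E. rewrite <- (exp_ln (u y)) at 2 by lra. rewrite <- exp_plus. f_equal. ring. }
  rewrite HE in Hv.
  assert (Hg : - g * phi y <= Rabs g * phi y).
  { apply Rmult_le_compat_r; [lra|]. rewrite <- Rabs_Ropp. apply RRle_abs. }
  assert (Hga : 0 <= Rabs g) by apply Rabs_pos.
  assert (Hq : 0 <= phi y0 / u y0) by (apply Rlt_le, Rdiv_lt_0_compat; lra).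
  assert (HA : 0 < AA p phi u Rb).
  { unfold AA. change (Rb + 1) with y0. change (gg p) with g.
    assert (0 <= Rabs g * (1 + phi y0 / u y0)) by (apply Rmult_le_pos; lra). lra. }
  split; [exact HA|].
  assert (HEb : E < AA p phi u Rb * y).
  { unfold AA. change (Rb + 1) with y0. change (gg p) with g.
    assert (u y * E < /2 * y * u y + Rabs g * (phi y0 + y * u y)) by nra.
    assert (phi y0 <= y * u y * (phi y0 / u y0)).
    { unfold Rdiv. rewrite <- Rmult_assoc. apply (Rmult_le_reg_r (u y0)); auto.
      rewrite Rmult_assoc, Rinv_l, Rmult_1_r by lra. assert (u y0 <= y * u y) by nra. assert (phi y0 * u y0 <= phi y0 * (y * u y)) by (apply Rmult_le_compat_l; lra). lra. }
    assert (u y * E < u y * ((/2 + Rabs g * (1 + phi y0 / u y0)) * y)) by nra.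
    apply Rmult_lt_reg_l in H1; auto. }
  assert (Hln : ln E < ln (AA p phi u Rb * y)).
  { apply ln_increasing; auto. unfold E; apply exp_pos. }
  unfold E in Hln. rewrite ln_exp in Hln. rewrite ln_mult in Hln by lra.
  pose proof (ln_lt_self y ltac:(lra)). lra.
Qed.

Definition tau0 p := c0 p / (4 * (p - 1)).
Definition y2 p (phi u : R -> R) Rb := y1 p phi u Rb + 1 + 4 * (tau0 p + bb p / 2) / (tau0 p * c0 p).
Definition TD p (phi u v : R -> R) y :=
  (TT u v y + (p-1) * TT u v y ^ 2 + y ^ 2 / 2 * (bb p - TT u v y * cc p (SS p phi u y))) / y.

Lemma y1_ge p phi u v Rb : Hyps p phi u v Rb -> Rb + 1 <= y1 p phi u Rb.
Proof.
  intros HH. pose proof HH as (Hp & HRb & Hphi & Hu & Hode & Hphip & Hup & Hvp).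
  unfold y1. assert (0 < dl p) by (unfold dl; pose proof (bb_pos p Hp); apply Rdiv_lt_0_compat; lra).
  assert (0 < phi (Rb+1)) by (apply Hphip; lra). assert (0 < u (Rb+1)) by (apply Hup; lra).
  assert (0 <= (bb p + 1) * phi (Rb + 1) / (dl p * u (Rb + 1))).
  { apply Rlt_le, Rdiv_lt_0_compat. pose proof (bb_pos p Hp). apply Rmult_lt_0_compat; lra. apply Rmult_lt_0_compat; lra. }
  lra.
Qed.

Lemma tau0_pos p : 1 < p -> 0 < tau0 p.
Proof. intros Hp. unfold tau0. apply Rdiv_lt_0_compat. apply c0_pos; auto. lra. Qed.

Lemma y2_ge p phi u v Rb : Hyps p phi u v Rb ->
  y1 p phi u Rb + 1 <= y2 p phi u Rb /\ 4 * (tau0 p + bb p / 2) / (tau0 p * c0 p) <= y2 p phi u Rb.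
Proof.
  intros HH. pose proof (y1_ge p phi u v Rb HH). destruct HH as (Hp & HRb & _).
  pose proof (tau0_pos p Hp). pose proof (c0_pos p Hp). pose proof (bb_pos p Hp).
  assert (0 <= 4 * (tau0 p + bb p / 2) / (tau0 p * c0 p)).
  { apply Rlt_le, Rdiv_lt_0_compat. lra. apply Rmult_lt_0_compat; lra. }
  unfold y2. split; lra.
Qed.

Lemma T_pos p phi u v Rb : Hyps p phi u v Rb -> forall x, Rb < x -> 0 < TT u v x.
Proof.
  intros HH x Hx. destruct HH as (Hp & HRb & Hphi & Hu & Hode & Hphip & Hup & Hvp).
  unfold TT. apply Rdiv_lt_0_compat. apply Rmult_lt_0_compat. lra. auto. apply Hup; lra.
Qed.

Lemma T_band p phi u v Rb : Hyps p phi u v Rb ->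
  exists a, y2 p phi u Rb <= a /\ forall x, a <= x -> TT u v x < tau0 p * (x * x).
Proof.
  intros HH. pose proof HH as (Hp & HRb & Hphi & Hu & Hode & Hphip & Hup & Hvp).
  pose proof (y1_ge p phi u v Rb HH) as Hy1. pose proof (y2_ge p phi u v Rb HH) as [Hy2a Hy2b].
  pose proof (tau0_pos p Hp) as Ht0. pose proof (c0_pos p Hp) as Hc0. pose proof (bb_pos p Hp) as Hb.
  set (Y2 := y2 p phi u Rb) in *. set (t0 := tau0 p) in *.
  destruct (classic (exists a, Y2 <= a /\ TT u v a < t0 * (a * a))) as [[a [Ha Hfa]]|Hno].
  - exists a. split; auto.
    intros x Hx.
    assert (TT u v x - t0 * (x * x) < 0); [|lra].
    apply (barrier (fun x => TT u v x - t0 * (x * x)) (fun x => TD p phi u v x - t0 * (1 * x + x * 1)) a); [| |lra|lra].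
    + intros z Hz. apply isd_minus. apply dT; auto; lra.
      apply (isd_eq _ _ (0 * (z * z) + t0 * (1 * z + z * 1))); [|ring].
      apply (isd_mult (fun _ => t0) (fun z => z * z)). apply isd_const.
      apply (isd_mult (fun z => z) (fun z => z)); apply isd_id.
    + intros z Hz Hf0.
      assert (Hz1 : y1 p phi u Rb <= z) by lra.
      destruct (S_bounds p phi u v Rb HH z Hz1) as (HS0 & HS1 & Hc).
      assert (HzT : TT u v z = t0 * (z * z)) by lra.
      unfold TD. rewrite HzT.
      set (c := cc p (SS p phi u z)) in *.
      assert (Hz0 : 1 <= z) by lra.
      assert (Hp1 : (p - 1) * t0 = c0 p / 4) by (unfold t0, tau0; field; lra).
      assert (HX : 4 * (t0 + bb p / 2) / (t0 * c0 p) <= z * z) by nra.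
      assert (HX' : 4 * (t0 + bb p / 2) <= t0 * c0 p * (z * z)).
      { apply (Rmult_le_compat_l (t0 * c0 p)) in HX; [|apply Rlt_le, Rmult_lt_0_compat; lra].
        replace (t0 * c0 p * (4 * (t0 + bb p / 2) / (t0 * c0 p))) with (4 * (t0 + bb p / 2)) in HX by (field; lra). lra. }
      assert (Hnum : t0 * (z * z) + (p - 1) * (t0 * (z * z)) ^ 2 + z ^ 2 / 2 * (bb p - t0 * (z * z) * c)
                     - t0 * (1 * z + z * 1) * z < 0).
      { set (X := z * z) in *.
        assert (HX0 : 0 < X) by (unfold X; nra).
        replace ((p - 1) * (t0 * X) ^ 2) with ((p - 1) * t0 * (t0 * X * X)) by (unfold X; ring).
        rewrite Hp1.
        assert (t0 * X * c >= t0 * X * c0 p) by (apply Rle_ge, Rmult_le_compat_l; [apply Rlt_le, Rmult_lt_0_compat|]; lra).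
        replace (z ^ 2) with X by (unfold X; ring).
        replace (t0 * (1 * z + z * 1) * z) with (2 * t0 * X) by (unfold X; ring).
        assert (X * (t0 * X * c) >= X * (t0 * X * c0 p)) by (apply Rle_ge, Rmult_le_compat_l; lra).
        assert (X * (4 * (t0 + bb p / 2)) <= X * (t0 * c0 p * X)) by (apply Rmult_le_compat_l; lra).
        nra. }
      apply (Rmult_lt_reg_r z); [lra|]. rewrite Rmult_0_l.
      replace (((t0 * (z * z) + (p - 1) * (t0 * (z * z)) ^ 2 + z ^ 2 / 2 * (bb p - t0 * (z * z) * c)) / z -
         t0 * (1 * z + z * 1)) * z) with
        (t0 * (z * z) + (p - 1) * (t0 * (z * z)) ^ 2 + z ^ 2 / 2 * (bb p - t0 * (z * z) * c)
                     - t0 * (1 * z + z * 1) * z) by (field; lra).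
      exact Hnum.
  - exfalso.
    assert (Hall : forall x, Y2 <= x -> t0 * (x * x) <= TT u v x).
    { intros x Hx. destruct (Rle_or_lt (t0 * (x * x)) (TT u v x)); auto. exfalso; apply Hno; exists x; auto. }
    assert (HY2 : Rb + 1 <= Y2) by lra.
    assert (Hgrow : forall x, Y2 <= x -> ln (u Y2) + t0 * (x * x) / 2 - t0 * (Y2 * Y2) / 2 <= ln (u x)).
    { intros x Hx.
      assert (t0 * (x * x) / 2 - ln (u x) <= t0 * (Y2 * Y2) / 2 - ln (u Y2)); [|lra].
      apply (nonincr_derive (fun z => t0 * (z * z) / 2 - ln (u z)) (fun z => t0 * z - v z / u z)); [exact Hx| |].
      - intros z Hz. apply isd_minus.
        apply (isd_eq _ _ (((0 * (z * z) + t0 * (1 * z + z * 1)) * 2 - (t0 * (z * z)) * 0) / 2^2)); [|field].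
        apply (is_derive_div (fun z => t0 * (z * z)) (fun _ => 2)). 
        apply (isd_mult (fun _ => t0) (fun z => z * z)). apply isd_const.
        apply (isd_mult (fun z => z) (fun z => z)); apply isd_id. apply isd_const. lra.
        apply (isd_eq _ _ (v z * / u z)); [|unfold Rdiv; ring].
        apply (is_derive_comp ln u z). apply is_derive_ln. apply Hup; lra. apply Hu; lra.
      - intros z Hz. pose proof (Hall z ltac:(lra)) as Hz'. unfold TT in Hz'.
        assert (Huz : 0 < u z) by (apply Hup; lra).
        assert (Heq : z * v z / u z = z * (v z / u z)) by (field; lra). rewrite Heq in Hz'.
        assert (t0 * z <= v z / u z) by (apply (Rmult_le_reg_l z); lra).
        lra. }
    set (A := AA p phi u Rb).
    set (K0 := Rabs (ln A) + (p - 1) * Rabs (ln (u Y2)) + (p - 1) * t0 * (Y2 * Y2) / 2).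
    assert (HK0 : 0 <= K0).
    { unfold K0. pose proof (Rabs_pos (ln A)). pose proof (Rabs_pos (ln (u Y2))).
      assert (0 <= (p - 1) * Rabs (ln (u Y2))) by (apply Rmult_le_pos; lra).
      assert (0 <= (p - 1) * t0 * (Y2 * Y2) / 2) by (assert (0 <= (p-1)*t0) by (apply Rmult_le_pos; lra); assert (0 <= Y2*Y2) by nra; unfold Rdiv; apply Rmult_le_pos; [apply Rmult_le_pos|]; lra).
      lra. }
    assert (Hpt : 0 < (p - 1) * t0) by (apply Rmult_lt_0_compat; lra).
    set (x := Y2 + 1 + 2 * (1 + 2 * K0) / ((p - 1) * t0)).
    assert (Hq : 0 <= 2 * (1 + 2 * K0) / ((p - 1) * t0)) by (apply Rlt_le, Rdiv_lt_0_compat; lra).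
    assert (Hx : Y2 <= x) by (unfold x; lra).
    pose proof (Hgrow x Hx) as Hg.
    destruct (crude p phi u v Rb HH x ltac:(lra)) as [HA Hc]. fold A in Hc, HA.
    assert (Hl1 : (p - 1) * (ln (u Y2) + t0 * (x * x) / 2 - t0 * (Y2 * Y2) / 2) <= (p - 1) * ln (u x)) by (apply Rmult_le_compat_l; lra).
    assert (Hr1 : - Rabs (ln (u Y2)) <= ln (u Y2)) by (pose proof (Rabs_maj2 (ln (u Y2))); lra).
    assert (Hr2 : ln A <= Rabs (ln A)) by apply RRle_abs.
    assert (Hr3 : (p - 1) * (- Rabs (ln (u Y2))) <= (p - 1) * ln (u Y2)) by (apply Rmult_le_compat_l; lra).
    assert (Hbig : 1 + 2 * K0 < (p - 1) * t0 * x / 2).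
    { unfold x. replace ((p - 1) * t0 * (Y2 + 1 + 2 * (1 + 2 * K0) / ((p - 1) * t0)) / 2)
         with ((p - 1) * t0 * (Y2 + 1) / 2 + (1 + 2 * K0)) by (field; lra).
      assert (0 < (p - 1) * t0 * (Y2 + 1) / 2). { apply Rmult_lt_0_compat; [apply Rmult_lt_0_compat|]; lra. } lra. }
    assert (Hx1 : 1 <= x) by lra.
    assert (Hbig2 : (1 + 2 * K0) * x < (p - 1) * t0 * x / 2 * x) by (apply Rmult_lt_compat_r; lra).
    unfold K0 in *. nra.
Qed.


Definition T1 p := 4 * bb p / c0 p.

Lemma T_bounded p phi u v Rb : Hyps p phi u v Rb ->
  exists y4, y2 p phi u Rb <= y4 /\ forall x, y4 <= x -> TT u v x < T1 p.
Proof.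
  intros HH. pose proof HH as (Hp & HRb & Hphi & Hu & Hode & Hphip & Hup & Hvp).
  pose proof (y1_ge p phi u v Rb HH) as Hy1. pose proof (y2_ge p phi u v Rb HH) as [Hy2a Hy2b].
  pose proof (tau0_pos p Hp) as Ht0. pose proof (c0_pos p Hp) as Hc0. pose proof (bb_pos p Hp) as Hb.
  destruct (T_band p phi u v Rb HH) as [a [Ha Hband]].
  set (t0 := tau0 p) in *.
  assert (HT1 : 0 < T1 p) by (unfold T1; apply Rdiv_lt_0_compat; lra).
  assert (H16 : 0 <= 16 / c0 p) by (apply Rlt_le, Rdiv_lt_0_compat; lra).
  set (a6 := a + 1 + 16 / c0 p).
  destruct (trap (TT u v) (TD p phi u v) a6 (T1 p) (T1 p)) as [N HN].
  - unfold a6. lra.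
  - exact HT1.
  - intros x Hx. apply dT; auto; unfold a6 in Hx; lra.
  - intros x Hx HTx.
    assert (Hxa : a <= x) by (unfold a6 in Hx; lra).
    assert (Hx1 : 1 <= x) by lra.
    destruct (S_bounds p phi u v Rb HH x ltac:(lra)) as (HS0 & HS1 & Hc).
    pose proof (Hband x Hxa) as Hbx.
    unfold TD. set (T := TT u v x) in *. set (c := cc p (SS p phi u x)) in *.
    assert (HT0 : 0 < T) by lra.
    assert (Hp1 : (p - 1) * t0 = c0 p / 4) by (unfold t0, tau0; field; lra).
    assert (16 / c0 p <= x) by (unfold a6 in Hx; lra).
    assert (Hx16 : 16 / c0 p <= x * x) by nra.
    assert (Hx16' : 16 <= c0 p * (x * x)).
    { apply (Rmult_le_compat_l (c0 p)) in Hx16; [|lra].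
      replace (c0 p * (16 / c0 p)) with 16 in Hx16 by (field; lra). lra. }
    assert (HcT : 4 * bb p <= c0 p * T).
    { unfold T1 in HTx. apply (Rmult_le_compat_l (c0 p)) in HTx; [|lra].
      replace (c0 p * (4 * bb p / c0 p)) with (4 * bb p) in HTx by (field; lra). lra. }
    assert (Hn : T + (p - 1) * T ^ 2 + x ^ 2 / 2 * (bb p - T * c) <= - T).
    { assert (H1 : (p - 1) * T ^ 2 <= c0 p / 4 * (x * x) * T).
      { rewrite <- Hp1. replace ((p - 1) * T ^ 2) with ((p - 1) * T * T) by ring.
        replace ((p - 1) * t0 * (x * x) * T) with ((p - 1) * (t0 * (x * x)) * T) by ring.
        apply Rmult_le_compat_r; [lra|]. apply Rmult_le_compat_l; lra. }
      assert (H2 : T * c0 p <= T * c) by (apply Rmult_le_compat_l; lra).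
      assert (H3 : x ^ 2 / 2 * (bb p - T * c) <= x ^ 2 / 2 * (bb p - T * c0 p)).
      { apply Rmult_le_compat_l. nra. lra. }
      assert (H4 : (x * x) * (4 * bb p) <= (x * x) * (c0 p * T)) by (apply Rmult_le_compat_l; nra).
      assert (H5 : T * 16 <= T * (c0 p * (x * x))) by (apply Rmult_le_compat_l; lra).
      replace (x ^ 2) with (x * x) in H3 by ring.
      nra. }
    apply (Rmult_le_reg_r x); [lra|].
    replace ((T + (p - 1) * T ^ 2 + x ^ 2 / 2 * (bb p - T * c)) / x * x) with
      (T + (p - 1) * T ^ 2 + x ^ 2 / 2 * (bb p - T * c)) by (field; lra).
    replace (- T1 p / x * x) with (- T1 p) by (field; lra). lra.
  - exists (Rmax N a6). split.
    + unfold a6. pose proof (Rmax_r N (a + 1 + 16 / c0 p)). lra.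
    + intros x Hx. apply HN. pose proof (Rmax_l N a6). lra.
Qed.


Definition Hq p (phi u v : R -> R) x := TT u v x * cc p (SS p phi u x) - bb p.
Definition Eq p (phi u v : R -> R) x :=
  cc p (SS p phi u x) * (TT u v x + (p - 1) * TT u v x ^ 2)
  - (p - 2) * TT u v x * ((bb p + 1) - SS p phi u x * (1 + TT u v x)).
Definition HDf p phi u v x := (Eq p phi u v x - cc p (SS p phi u x) * x ^ 2 / 2 * Hq p phi u v x) / x.

Lemma dH p phi u v Rb : Hyps p phi u v Rb -> forall x, 0 < x -> is_derive (Hq p phi u v) x (HDf p phi u v x).
Proof.
  intros HH x Hx. pose proof HH as (Hp & HRb & Hphi & Hu & Hode & Hphip & Hup & Hvp).
  unfold Hq. eapply isd_eq.
  apply isd_minus. 2: apply isd_const.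
  apply (isd_mult (TT u v) (fun x => cc p (SS p phi u x))).
  apply (dT p phi u v); auto.
  unfold cc. apply isd_minus. apply isd_const.
  apply (isd_mult (fun _ => p - 2) (SS p phi u)). apply isd_const.
  apply (dS p phi u v); auto.
  unfold HDf, Eq, Hq, TD. field. lra.
Qed.

Definition Smax' p := Smax p.
Definition cmax p := (p - 1) + Rabs (p - 2) * Smax p.
Definition E0 p := cmax p * (T1 p + (p - 1) * T1 p ^ 2) + Rabs (p - 2) * T1 p * ((bb p + 1) + Smax p * (1 + T1 p)).

Lemma E_bound p (T S : R) : 1 < p -> 0 < T -> T < T1 p -> 0 < S -> S <= Smax p -> 0 <= cc p S ->
  - E0 p <= cc p S * (T + (p - 1) * T ^ 2) - (p - 2) * T * ((bb p + 1) - S * (1 + T)) <= E0 p.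
Proof.
  intros Hp HT0 HT1 HS0 HS1 Hc.
  pose proof (bb_pos p Hp) as Hb.
  assert (Hcm : cc p S <= cmax p).
  { unfold cc, cmax. assert (- (p - 2) * S <= Rabs (p - 2) * S).
    { apply Rmult_le_compat_r; [lra|]. rewrite <- Rabs_Ropp. apply RRle_abs. }
    assert (Rabs (p - 2) * S <= Rabs (p - 2) * Smax p) by (apply Rmult_le_compat_l; [apply Rabs_pos|lra]). lra. }
  assert (HA : 0 <= T + (p - 1) * T ^ 2 <= T1 p + (p - 1) * T1 p ^ 2).
  { split. assert (0 <= (p - 1) * T ^ 2) by (apply Rmult_le_pos; [lra|nra]). lra.
    assert ((p - 1) * T ^ 2 <= (p - 1) * T1 p ^ 2) by (apply Rmult_le_compat_l; [lra|]; apply pow_incr; lra). lra. }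
  assert (HcA : 0 <= cc p S * (T + (p - 1) * T ^ 2) <= cmax p * (T1 p + (p - 1) * T1 p ^ 2)).
  { split. apply Rmult_le_pos; lra. apply Rmult_le_compat; lra. }
  assert (HW : Rabs ((bb p + 1) - S * (1 + T)) <= (bb p + 1) + Smax p * (1 + T1 p)).
  { apply Rabs_le. split.
    - assert (S * (1 + T) <= Smax p * (1 + T1 p)) by (apply Rmult_le_compat; lra). lra.
    - assert (0 <= S * (1 + T)) by (apply Rmult_le_pos; lra). assert (0 <= Smax p * (1 + T1 p)) by (apply Rmult_le_pos; lra). lra. }
  assert (HX : Rabs ((p - 2) * T * ((bb p + 1) - S * (1 + T))) <= Rabs (p - 2) * T1 p * ((bb p + 1) + Smax p * (1 + T1 p))).
  { rewrite !Rabs_mult. rewrite (Rabs_pos_eq T) by lra.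
    apply Rmult_le_compat. apply Rmult_le_pos; [apply Rabs_pos|lra]. apply Rabs_pos.
    apply Rmult_le_compat_l; [apply Rabs_pos|lra]. exact HW. }
  apply Rabs_le_between in HX. unfold E0. lra.
Qed.

Lemma H_to_0 p phi u v Rb : Hyps p phi u v Rb ->
  forall eps, 0 < eps -> exists N, forall x, N <= x -> Rabs (Hq p phi u v x) < eps.
Proof.
  intros HH eps Heps. pose proof HH as (Hp & HRb & Hphi & Hu & Hode & Hphip & Hup & Hvp).
  pose proof (y1_ge p phi u v Rb HH) as Hy1. pose proof (y2_ge p phi u v Rb HH) as [Hy2a Hy2b].
  pose proof (c0_pos p Hp) as Hc0. pose proof (bb_pos p Hp) as Hb.
  destruct (T_bounded p phi u v Rb HH) as [y4 [Hy4 HT]].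
  assert (HE0 : 0 <= E0 p).
  { destruct (S_bounds p phi u v Rb HH y4 ltac:(lra)) as (HS0 & HS1 & Hc).
    pose proof (T_pos p phi u v Rb HH y4 ltac:(lra)).
    pose proof (E_bound p _ _ Hp H (HT y4 ltac:(lra)) HS0 HS1 ltac:(lra)). lra. }
  set (q := 2 * (E0 p + 1) / (c0 p * eps)).
  assert (Hq0 : 0 <= q) by (apply Rlt_le, Rdiv_lt_0_compat; [lra|apply Rmult_lt_0_compat; lra]).
  set (a7 := y4 + 1 + q).
  assert (Hkey : forall x, a7 <= x ->
     0 < x /\ c0 p <= cc p (SS p phi u x) /\ - E0 p <= Eq p phi u v x <= E0 p /\ E0 p + 1 <= c0 p * x ^ 2 / 2 * eps).
  { intros x Hx. assert (Hx4 : y4 <= x) by (unfold a7 in Hx; lra).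
    destruct (S_bounds p phi u v Rb HH x ltac:(lra)) as (HS0 & HS1 & Hc).
    pose proof (T_pos p phi u v Rb HH x ltac:(lra)).
    pose proof (E_bound p _ _ Hp H (HT x Hx4) HS0 HS1 ltac:(lra)).
    split; [lra|]. split; [lra|]. split; [unfold Eq; lra|].
    assert (Hx1 : 1 <= x) by lra.
    assert (q <= x * x) by (unfold a7 in Hx; nra).
    apply (Rmult_le_compat_l (c0 p * eps)) in H1; [|apply Rlt_le, Rmult_lt_0_compat; lra].
    unfold q in H1. replace (c0 p * eps * (2 * (E0 p + 1) / (c0 p * eps))) with (2 * (E0 p + 1)) in H1 by (field; lra).
    replace (x ^ 2) with (x * x) by ring. lra. }
  assert (Ha7 : 0 < a7) by (unfold a7; lra).
  destruct (trap (Hq p phi u v) (HDf p phi u v) a7 eps 1) as [N1 HN1]; auto; try lra.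
  { intros x Hx. apply (dH p phi u v Rb HH). lra. }
  { intros x Hx HHx. destruct (Hkey x Hx) as (Hx0 & Hc & HE & Hbig).
    unfold HDf. apply (Rmult_le_reg_r x); auto.
    replace ((Eq p phi u v x - cc p (SS p phi u x) * x ^ 2 / 2 * Hq p phi u v x) / x * x)
      with (Eq p phi u v x - cc p (SS p phi u x) * x ^ 2 / 2 * Hq p phi u v x) by (field; lra).
    replace (- (1) / x * x) with (- (1)) by (field; lra).
    assert (c0 p * x ^ 2 / 2 * eps <= cc p (SS p phi u x) * x ^ 2 / 2 * Hq p phi u v x).
    { apply Rmult_le_compat; try lra. apply Rmult_le_pos; [apply Rmult_le_pos|]; try lra. nra.
      apply Rmult_le_compat_r; [lra|]. apply Rmult_le_compat_r; [nra|lra]. }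
    lra. }
  destruct (trap (fun x => 0 - Hq p phi u v x) (fun x => 0 - HDf p phi u v x) a7 eps 1) as [N2 HN2]; auto; try lra.
  { intros x Hx. apply isd_minus. apply isd_const. apply (dH p phi u v Rb HH). lra. }
  { intros x Hx HHx. destruct (Hkey x Hx) as (Hx0 & Hc & HE & Hbig).
    unfold HDf. apply (Rmult_le_reg_r x); auto.
    replace ((0 - (Eq p phi u v x - cc p (SS p phi u x) * x ^ 2 / 2 * Hq p phi u v x) / x) * x)
      with (0 - Eq p phi u v x + cc p (SS p phi u x) * x ^ 2 / 2 * Hq p phi u v x) by (field; lra).
    replace (- (1) / x * x) with (- (1)) by (field; lra).
    assert (c0 p * x ^ 2 / 2 * eps <= cc p (SS p phi u x) * x ^ 2 / 2 * (0 - Hq p phi u v x)).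
    { apply Rmult_le_compat; try lra. apply Rmult_le_pos; [apply Rmult_le_pos|]; try lra. nra.
      apply Rmult_le_compat_r; [lra|]. apply Rmult_le_compat_r; [nra|lra]. }
    lra. }
  exists (Rmax N1 N2). intros x Hx. apply Rabs_def1.
  apply HN1. pose proof (Rmax_l N1 N2). lra.
  assert (0 - Hq p phi u v x < eps) by (apply HN2; pose proof (Rmax_r N1 N2); lra). lra.
Qed.


Definition SD p (phi u v : R -> R) y := ((bb p + 1) - SS p phi u y * (1 + TT u v y)) / y.

Lemma S_ident p S T : 1 < p -> cc p S <> 0 ->
  (bb p + 1) - S * (1 + T) = (1 - S) * (1 + / cc p S) - S * (T * cc p S - bb p) / cc p S.
Proof. intros Hp Hc. unfold cc, bb in *. field. split; lra. Qed.

Lemma S_to_1 p phi u v Rb : Hyps p phi u v Rb ->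
  forall eps, 0 < eps -> exists N, forall x, N <= x -> Rabs (SS p phi u x - 1) < eps.
Proof.
  intros HH eps Heps. pose proof HH as (Hp & HRb & Hphi & Hu & Hode & Hphip & Hup & Hvp).
  pose proof (y1_ge p phi u v Rb HH) as Hy1.
  pose proof (c0_pos p Hp) as Hc0. pose proof (bb_pos p Hp) as Hb.
  assert (HSm : 0 < Smax p).
  { destruct (S_bounds p phi u v Rb HH (y1 p phi u Rb) ltac:(lra)) as (HS0 & HS1 & _). lra. }
  set (eH := eps * c0 p / (2 * Smax p)).
  assert (HeH : 0 < eH) by (unfold eH; apply Rdiv_lt_0_compat; [apply Rmult_lt_0_compat|]; lra).
  destruct (H_to_0 p phi u v Rb HH eH HeH) as [N7 HN7].
  set (a8 := Rmax N7 (y1 p phi u Rb) + 1).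
  assert (Ha8 : N7 + 1 <= a8 /\ y1 p phi u Rb + 1 <= a8).
  { unfold a8. pose proof (Rmax_l N7 (y1 p phi u Rb)). pose proof (Rmax_r N7 (y1 p phi u Rb)). lra. }
  assert (Hkey : forall x, a8 <= x -> 0 < x /\ 0 < SS p phi u x /\ c0 p <= cc p (SS p phi u x) /\
     Rabs (SS p phi u x * Hq p phi u v x / cc p (SS p phi u x)) <= eps / 2 /\
     (bb p + 1) - SS p phi u x * (1 + TT u v x) =
     (1 - SS p phi u x) * (1 + / cc p (SS p phi u x)) - SS p phi u x * Hq p phi u v x / cc p (SS p phi u x)).
  { intros x Hx. destruct (S_bounds p phi u v Rb HH x ltac:(lra)) as (HS0 & HS1 & Hc).
    split; [lra|]. split; [lra|]. split; [lra|]. split.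
    - unfold Rdiv. rewrite !Rabs_mult. rewrite (Rabs_pos_eq (SS p phi u x)) by lra.
      rewrite Rabs_inv, (Rabs_pos_eq (cc p _)) by lra.
      pose proof (HN7 x ltac:(lra)) as Hh.
      assert (SS p phi u x * Rabs (Hq p phi u v x) <= Smax p * eH) by (apply Rmult_le_compat; try lra; apply Rabs_pos).
      assert (/ cc p (SS p phi u x) <= / c0 p) by (apply Rinv_le_contravar; lra).
      assert (SS p phi u x * Rabs (Hq p phi u v x) * / cc p (SS p phi u x) <= Smax p * eH * / c0 p).
      { apply Rmult_le_compat; try lra. apply Rmult_le_pos; [lra|apply Rabs_pos]. apply Rlt_le, Rinv_0_lt_compat; lra. }
      replace (Smax p * eH * / c0 p) with (eps / 2) in H1 by (unfold eH; field; lra). lra.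
    - unfold Hq. apply S_ident; auto. lra. }
  assert (Ha8p : 0 < a8) by lra.
  destruct (trap (fun x => SS p phi u x - 1) (fun x => SD p phi u v x - 0) a8 eps (eps / 2)) as [N1 HN1]; auto; try lra.
  { intros x Hx. apply isd_minus. apply (dS p phi u v); auto. lra. apply isd_const. }
  { intros x Hx Hf. destruct (Hkey x Hx) as (Hx0 & HS0 & Hc & Habs & Hid).
    unfold SD. rewrite Hid. apply Rabs_le_between in Habs.
    assert (0 < / cc p (SS p phi u x)) by (apply Rinv_0_lt_compat; lra).
    assert ((1 - SS p phi u x) * (1 + / cc p (SS p phi u x)) <= - eps) by nra.
    unfold Rdiv. rewrite Rminus_0_r. apply Rmult_le_compat_r. apply Rlt_le, Rinv_0_lt_compat; lra.
    unfold Rdiv in Habs. lra. }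
  destruct (trap (fun x => 1 - SS p phi u x) (fun x => 0 - SD p phi u v x) a8 eps (eps / 2)) as [N2 HN2]; auto; try lra.
  { intros x Hx. apply isd_minus. apply isd_const. apply (dS p phi u v); auto. lra. }
  { intros x Hx Hf. destruct (Hkey x Hx) as (Hx0 & HS0 & Hc & Habs & Hid).
    unfold SD. rewrite Hid. apply Rabs_le_between in Habs.
    assert (0 < / cc p (SS p phi u x)) by (apply Rinv_0_lt_compat; lra).
    assert (eps <= (1 - SS p phi u x) * (1 + / cc p (SS p phi u x))) by nra.
    replace (0 - ((1 - SS p phi u x) * (1 + / cc p (SS p phi u x)) - SS p phi u x * Hq p phi u v x / cc p (SS p phi u x)) / x)
      with ((SS p phi u x * Hq p phi u v x / cc p (SS p phi u x) - (1 - SS p phi u x) * (1 + / cc p (SS p phi u x))) * / x) by (field; lra).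
    unfold Rdiv. apply Rmult_le_compat_r. apply Rlt_le, Rinv_0_lt_compat; lra.
    unfold Rdiv in Habs. lra. }
  exists (Rmax N1 N2). intros x Hx. apply Rabs_def1.
  apply HN1. pose proof (Rmax_l N1 N2). lra.
  assert (1 - SS p phi u x < eps) by (apply HN2; pose proof (Rmax_r N1 N2); lra). lra.
Qed.


Lemma lim_of_eps (f : R -> R) l : (forall eps, 0 < eps -> exists N, forall x, N <= x -> Rabs (f x - l) < eps) ->
  is_lim f p_infty l.
Proof.
  intros H. apply is_lim_spec. intros eps. destruct (H eps (cond_pos eps)) as [N HN].
  exists N. intros x Hx. apply HN. lra.
Qed.

Lemma final_lim p phi u v Rb : Hyps p phi u v Rb ->
  is_lim (fun y => phi y / Rpower y (bb p + 1)) p_infty (Rpower p (- bb p) / (bb p + 1)).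
Proof.
  intros HH. pose proof HH as (Hp & HRb & Hphi & Hu & Hode & Hphip & Hup & Hvp).
  pose proof (bb_pos p Hp) as Hb. pose proof (y1_ge p phi u v Rb HH) as Hy1.
  assert (LS : is_lim (SS p phi u) p_infty 1) by (apply lim_of_eps; apply (S_to_1 p phi u v Rb HH)).
  assert (LH : is_lim (Hq p phi u v) p_infty 0).
  { apply lim_of_eps. intros eps He. destruct (H_to_0 p phi u v Rb HH eps He) as [N HN].
    exists N. intros x Hx. rewrite Rminus_0_r. auto. }
  assert (Lc : is_lim (fun x => cc p (SS p phi u x)) p_infty 1).
  { unfold cc. apply (lim_eq _ ((p - 1) - (p - 2) * 1)); [|ring].
    apply (lim_minus (fun _ => p - 1) (fun x => (p - 2) * SS p phi u x)). apply lim_const.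
    apply (lim_mult (fun _ => p - 2) (SS p phi u)). apply lim_const. exact LS. }
  assert (LT : is_lim (TT u v) p_infty (bb p)).
  { apply (is_lim_ext_loc (fun x => (Hq p phi u v x + bb p) / cc p (SS p phi u x))).
    { exists (y1 p phi u Rb). intros x Hx.
      destruct (S_bounds p phi u v Rb HH x ltac:(lra)) as (HS0 & HS1 & Hc).
      pose proof (c0_pos p Hp). unfold Hq. field. lra. }
    apply (lim_eq _ ((0 + bb p) / 1)); [|field].
    apply (lim_div (fun x => Hq p phi u v x + bb p) (fun x => cc p (SS p phi u x))); [|exact Lc|lra].
    apply (lim_plus (Hq p phi u v) (fun _ => bb p)). exact LH. apply lim_const. }
  assert (LT2 : is_lim (fun x => TT u v x / (x * x)) p_infty 0).
  { replace (Finite 0) with (Rbar_div (bb p) p_infty) by (simpl; f_equal; ring).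
    apply is_lim_div. exact LT.
    apply (is_lim_mult (fun x => x) (fun x => x) p_infty p_infty p_infty). apply is_lim_id. apply is_lim_id. simpl; auto.
    discriminate. simpl; auto. }
  set (Q1 := fun x => Rpower (u x) p / (u x * x)).
  assert (LQ : is_lim Q1 p_infty (/ p)).
  { apply (is_lim_ext_loc (fun x => /2 - gg p * SS p phi u x / (bb p + 1) - TT u v x / (x * x))).
    { exists (Rb + 1). intros x Hx. unfold Q1. assert (0 < u x) by (apply Hup; lra).
      assert (HP : Rpower (u x) p = /2 * x * u x - gg p * phi x - v x) by (rewrite (Hode x) by lra; ring).
      rewrite HP. unfold SS, TT. field. split; lra. }
    apply (lim_eq _ (/2 - gg p * 1 / (bb p + 1) - 0)); [|unfold gg, bb; field; lra].
    apply (lim_minus (fun x => /2 - gg p * SS p phi u x / (bb p + 1)) (fun x => TT u v x / (x * x))); [|exact LT2].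
    apply (lim_minus (fun _ => /2) (fun x => gg p * SS p phi u x / (bb p + 1))); [apply lim_const|].
    apply (lim_div (fun x => gg p * SS p phi u x) (fun _ => bb p + 1)); [|apply lim_const|lra].
    apply (lim_mult (fun _ => gg p) (SS p phi u)); [apply lim_const|exact LS]. }
  assert (LE : is_lim (fun x => exp (bb p * ln (Q1 x))) p_infty (exp (bb p * ln (/ p)))).
  { apply (is_lim_comp_continuous Q1 (fun q => exp (bb p * ln q))). exact LQ.
    apply (@ex_derive_continuous R_AbsRing R_NormedModule). auto_derive.
    apply Rinv_0_lt_compat; lra. }
  apply (is_lim_ext_loc (fun x => (SS p phi u x * / (bb p + 1)) * exp (bb p * ln (Q1 x)))).
  { exists (Rb + 1). intros x Hx. assert (Hux : 0 < u x) by (apply Hup; lra).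
    assert (Hx0 : 0 < x) by lra.
    unfold Q1, Rpower, SS.
    rewrite ln_div, ln_exp, ln_mult by (try apply exp_pos; try apply Rmult_lt_0_compat; lra).
    replace (bb p * (p * ln (u x) - (ln (u x) + ln x))) with (ln (u x) - bb p * ln x) by (unfold bb; field; lra).
    unfold Rminus. rewrite exp_plus, exp_Ropp, exp_ln by lra.
    replace ((bb p + 1) * ln x) with (ln x + bb p * ln x) by ring.
    rewrite exp_plus, exp_ln by lra.
    field. split; [apply Rgt_not_eq, exp_pos|]. split; lra. }
  replace (Rpower p (- bb p) / (bb p + 1)) with ((1 * / (bb p + 1)) * exp (bb p * ln (/ p))).
  2:{ unfold Rpower. rewrite ln_Rinv by lra. replace (bb p * - ln p) with (- bb p * ln p) by ring. field. lra. }
  apply (lim_mult (fun x => SS p phi u x * / (bb p + 1)) (fun x => exp (bb p * ln (Q1 x)))); [|exact LE].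
  apply (lim_mult (SS p phi u) (fun _ => / (bb p + 1))); [exact LS|apply lim_const].
Qed.


Theorem proposition7p2 (p alpha Rb : R) (phi phi1 phi2 : R -> R) :
  1 < p ->
  0 < alpha ->
  (* phi is a C^2-type solution on [0, +oo) with phi' = phi1, phi'' = phi2 *)
  deriv_on_nonneg phi phi1 ->
  deriv_on_nonneg phi1 phi2 ->
  (forall y, 0 < y ->
     phi2 y = / 2 * y * phi1 y - ((p - 2) / (2 * (p - 1))) * phi y
              - rpow (Rabs (phi1 y)) p) ->
  phi 0 = 0 ->
  phi1 0 = alpha ->
  (forall y, 0 < y -> 0 < phi y) ->
  (forall y, 0 < y -> 0 < phi1 y) ->
  0 < Rb ->
  (forall y, 0 <= y < Rb -> phi2 y < 0) ->
  (forall y, Rb < y -> 0 < phi2 y) ->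
  is_lim (fun y => phi y / Rpower y (/ (p - 1) + 1)) p_infty
    (Rpower p (- / (p - 1)) / (/ (p - 1) + 1)).
Proof.
  intros Hp Ha [Hd1 _] [Hd2 _] Hode H0 H1 Hphip Hup HRb Hneg Hvp.
  assert (HH : Hyps p phi phi1 phi2 Rb).
  { assert (Hode' : forall y, 0 < y -> phi2 y = /2 * y * phi1 y - gg p * phi y - Rpower (phi1 y) p).
    2:{ unfold Hyps. split; [exact Hp|]. split; [exact HRb|]. split; [exact Hd1|]. split; [exact Hd2|].
        split; [exact Hode'|]. split; [exact Hphip|]. split; [exact Hup|exact Hvp]. }
    intros z Hz. rewrite (Hode z Hz). unfold rpow, gg.
    rewrite Rabs_pos_eq by (apply Rlt_le, Hup; auto).
    destruct (Rle_dec (phi1 z) 0) as [Hle|_]; [pose proof (Hup z Hz); lra|reflexivity]. }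
  exact (final_lim p phi phi1 phi2 Rb HH).
Qed.
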